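(* Let $u$ be a quasi-definite linear functional on $\mathbb C[\boldsymbol x]$, let $(\boldsymbol x_i,\boldsymbol\beta_i)\in\mathbb R^D\times\mathbb Z_+^D$, $i=1,\dots,q$, with the $\boldsymbol x_i$ distinct, let $\xi_{i,\boldsymbol\alpha}\in\mathbb C$ for $\boldsymbol\alpha\preceq\boldsymbol\beta_i$, and let $$\hat u=u+\sum_{i=1}^q\sum_{\boldsymbol\alpha\preceq\boldsymbol\beta_i}\frac{(-1)^{|\boldsymbol\alpha|}}{\boldsymbol\alpha!}\xi_{i,\boldsymbol\alpha}\delta^{(\boldsymbol\alpha)}(\boldsymbol x-\boldsymbol x_i),$$ assumed quasi-definite. Then for every $n\ge1$ the matrix $I_{N_S}+\Xi\mathcal K_{n-1}(S)$ is invertible and $$\hat P_{[n]}(\boldsymbol x)=\Theta_*\begin{pmatrix}I_{N_S}+\Xi\mathcal K_{n-1}(S)&\Xi\big(\mathcal J_{K_{n-1}(\cdot,\boldsymbol x)}(S)\big)^\top\\ \mathcal J_{P_{[n]}}(S)&P_{[n]}(\boldsymbol x)\end{pmatrix},\qquad \hat H_{[n]}=\Theta_*\begin{pmatrix}I_{N_S}+\Xi\mathcal K_{n-1}(S)&-\Xi\big(\mathcal J_{P_{[n]}}(S)\big)^\top\\ \mathcal J_{P_{[n]}}(S)&H_{[n]}\end{pmatrix}.$$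
   Context: Multi-indices are totally ordered by $\preceq$: graded lexicographic order (by length, then lexicographically). $\chi(\boldsymbol x)$ is the semi-infinite vector of monomials in this order, blocks $\chi_{[k]}$. For a linear functional $u$ on $\mathbb C[\boldsymbol x]$ (applied entrywise), moment matrix $G=\langle u,\chi\chi^\top\rangle$; quasi-definite means all block truncations nonsingular; then $G=S^{-1}HS^{-\top}$ with $S$ block lower unitriangular and $H$ block diagonal with blocks $H_{[k]}$; $P=S\chi$ with blocks $P_{[k]}$ are the monic orthogonal polynomials; $P^{[n]}=(P_{[0]}^\top,\dots,P_{[n-1]}^\top)^\top$, $H^{[n]}=\operatorname{diag}(H_{[0]},\dots,H_{[n-1]})$; hats refer to $\hat u$. Christoffel–Darboux kernel $K_{n-1}(\boldsymbol x,\boldsymbol y)=\sum_{m=0}^{n-1}P_{[m]}(\boldsymbol x)^\top H_{[m]}^{-1}P_{[m]}(\boldsymbol y)$. $\langle\delta^{(\boldsymbol\alpha)}(\boldsymbol x-\boldsymbol x_i),P\rangle=(-1)^{|\boldsymbol\alpha|}\partial^{\boldsymbol\alpha}P(\boldsymbol x_i)$. $S=\{(\boldsymbol x_i,\boldsymbol\beta_i)\}$. Jet: for a polynomial (or column vector of polynomials) $F$, $\mathcal J_F^{\boldsymbol\beta}(\boldsymbol y)$ is the row (matrix) $\big[\frac{1}{\boldsymbol\alpha!}\partial^{\boldsymbol\alpha}F(\boldsymbol y)\big]_{\boldsymbol\alpha\preceq\boldsymbol\beta}$ with columns in the order $\preceq$; $\mathcal J_F(S)=\big[\mathcal J_F^{\boldsymbol\beta_1}(\boldsymbol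 x_1),\dots,\mathcal J_F^{\boldsymbol\beta_q}(\boldsymbol x_q)\big]$, having $N_S=\sum_i\#\{\boldsymbol\alpha\preceq\boldsymbol\beta_i\}$ columns; $\mathcal J_{K_{n-1}(\cdot,\boldsymbol x)}(S)$ is the jet of $\boldsymbol y\mapsto K_{n-1}(\boldsymbol y,\boldsymbol x)$. $\xi^{(i)}$ is the square matrix indexed by $\boldsymbol\alpha,\boldsymbol\beta\preceq\boldsymbol\beta_i$ with entries $\xi_{i,\boldsymbol\alpha+\boldsymbol\beta}$ (taken as $0$ when $\boldsymbol\alpha+\boldsymbol\beta\not\preceq\boldsymbol\beta_i$); $\Xi=\operatorname{diag}(\xi^{(1)},\dots,\xi^{(q)})$. $\mathcal K_{n-1}(S)=\big(\mathcal J_{P^{[n]}}(S)\big)^\top(H^{[n]})^{-1}\mathcal J_{P^{[n]}}(S)$. Last quasi-determinant: $\Theta_*\begin{pmatrix}A&B\\C&D\end{pmatrix}=D-CA^{-1}B$. *)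

(* Defs.v *)
From HB Require Import structures.
From mathcomp Require Import all_boot all_order all_algebra.
From mathcomp Require Import mpoly.
From mathcomp Require Export complex.

Set Implicit Arguments.
Unset Strict Implicit.
Unset Printing Implicit Defensive.

Import Order.TTheory GRing.Theory Num.Theory.
Local Open Scope ring_scope.

Definition mfact (D : nat) (a : 'X_{1..D}) : nat := (\prod_(i < D) (a i)`!)%N.

(* lexicographic comparison: a comes strictly before b inside a block   *)
(* iff at the first index where they differ, a has the larger entry     *)
(* (so chi_[1] = (x_1, ..., x_D), chi_[2] = (x_1^2, x_1 x_2, ...)).      *)
Definition lexbefore (D : nat) (a b : 'X_{1..D}) : bool :=
  [exists i : 'I_D, [forall j : 'I_D, (j < i)%N ==> (a j == b j)] && (b i < a i)%N].

Definition mpreceq (D : nat) (a b : 'X_{1..D}) : bool :=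
  (mdeg a < mdeg b)%N || ((mdeg a == mdeg b) && ((a == b) || lexbefore a b)).

Definition mons (D k : nat) : seq 'X_{1..D} :=
  sort (@mpreceq D)
    [seq a <- [seq [multinom (f i : nat) | i < D] | f : {ffun 'I_D -> 'I_k.+1}]
       | mdeg a == k].

Fixpoint chi (D n : nat) : seq 'X_{1..D} :=
  if n is n'.+1 then chi D n' ++ mons D n' else [::].

Definition Nb (D n : nat) : nat := size (chi D n).
Definition rb (D n : nat) : nat := size (mons D n).

(* The truncation at level n (multi-indices of length <= n) is indexed  *)
(* by 'I_(Nb D n + rb D n): first the block chi^{[n]}, then chi_[n].    *)
Definition tmon (D n : nat) (i : 'I_(Nb D n + rb D n)) : 'X_{1..D} :=
  nth 0%MM (chi D n ++ mons D n) i.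
Definition tdeg (D n : nat) (i : 'I_(Nb D n + rb D n)) : nat := mdeg (tmon i).

Section Functionals.
Variables (F : fieldType) (D : nat).

Definition lin_functional (u : {mpoly F[D]} -> F) : Prop :=
  forall (a : F) (p r : {mpoly F[D]}), u (a *: p + r) = a * u p + u r.

(* truncated moment matrix G^{[n+1]} = <u, chi^{[n+1]} (chi^{[n+1]})^T> *)
Definition Gtr (u : {mpoly F[D]} -> F) (n : nat) : 'M[F]_(Nb D n + rb D n) :=
  \matrix_(i, j) u 'X_[tmon i + tmon j].

Definition quasi_definite (u : {mpoly F[D]} -> F) : Prop :=
  forall n : nat, Gtr u n \in unitmx.

Definition block_lower_unitri (n : nat) (S : 'M[F]_(Nb D n + rb D n)) : Prop :=
  forall i j, ((tdeg i < tdeg j)%N -> S i j = 0) /\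
              (tdeg i = tdeg j -> S i j = (i == j)%:R).
Definition block_diagonal (n : nat) (H : 'M[F]_(Nb D n + rb D n)) : Prop :=
  forall i j, tdeg i != tdeg j -> H i j = 0.

Definition LU_factorization (u : {mpoly F[D]} -> F) (n : nat)
    (S H : 'M[F]_(Nb D n + rb D n)) : Prop :=
  [/\ block_lower_unitri S, block_diagonal H &
      Gtr u n = invmx S *m H *m (invmx S)^T].

(* P = S chi (truncated): the monic orthogonal polynomials of length <= n *)
Definition Pvec (n : nat) (S : 'M[F]_(Nb D n + rb D n)) :
    'cV[{mpoly F[D]}]_(Nb D n + rb D n) :=
  \col_i \sum_j (S i j)%:MP * 'X_[tmon j].

Definition Pupto (n : nat) S : 'cV[{mpoly F[D]}]_(Nb D n) := usubmx (Pvec S).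
Definition Pblk (n : nat) S : 'cV[{mpoly F[D]}]_(rb D n) := dsubmx (Pvec S).
Definition Hupto (n : nat) (H : 'M[F]_(Nb D n + rb D n)) : 'M[F]_(Nb D n) :=
  ulsubmx H.
Definition Hblk (n : nat) (H : 'M[F]_(Nb D n + rb D n)) : 'M[F]_(rb D n) :=
  drsubmx H.

End Functionals.

(* Jets. For A a commutative ring with units (F, or F[x] for kernels).  *)

Definition jet (A : comUnitRingType) (D : nat) (P : {mpoly A[D]})
    (pt : 'I_D -> A) (a : 'X_{1..D}) : A :=
  ((mfact a)%:R)^-1 * (mderivm a P).@[pt].

Definition jetidx (D : nat) (b : 'X_{1..D}) : seq 'X_{1..D} :=
  [seq a <- chi D (mdeg b).+1 | mpreceq a b].

Definition jw (D : nat) (b : 'X_{1..D}) : nat := size (jetidx b).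

Definition jetnode (A : comUnitRingType) (D m : nat)
    (P : 'cV[{mpoly A[D]}]_m) (pt : 'I_D -> A) (b : 'X_{1..D}) :
    'M[A]_(m, jw b) :=
  \matrix_(r, k) jet (P r 0) pt (nth 0%MM (jetidx b) k).

Definition jetS (A : comUnitRingType) (D m q : nat)
    (P : 'cV[{mpoly A[D]}]_m) (pts : 'I_q -> 'I_D -> A)
    (beta : 'I_q -> 'X_{1..D}) : 'M[A]_(m, \sum_(i < q) jw (beta i)) :=
  \mxrow_(i < q) jetnode P (pts i) (beta i).

Section Perturbation.
Variables (F : fieldType) (D q : nat).
Variables (pts : 'I_q -> 'I_D -> F) (beta : 'I_q -> 'X_{1..D})
          (xi : 'I_q -> 'X_{1..D} -> F).

(* <delta^{(alpha)}(x - pt), p> = (-1)^{|alpha|} d^alpha p (pt) *)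
Definition delta_der (pt : 'I_D -> F) (a : 'X_{1..D}) (p : {mpoly F[D]}) : F :=
  (-1) ^+ mdeg a * (mderivm a p).@[pt].

Definition uhat (u : {mpoly F[D]} -> F) (p : {mpoly F[D]}) : F :=
  u p + \sum_(i < q) \sum_(a <- jetidx (beta i))
          ((-1) ^+ mdeg a / (mfact a)%:R) * xi i a * delta_der (pts i) a p.

Definition ximat (i : 'I_q) : 'M[F]_(jw (beta i)) :=
  \matrix_(k, l)
    let s := (nth 0%MM (jetidx (beta i)) k + nth 0%MM (jetidx (beta i)) l)%MM in
    if mpreceq s (beta i) then xi i s else 0.

Definition NS : nat := \sum_(i < q) jw (beta i).

Definition Xi : 'M[F]_NS := \mxdiag_(i < q) ximat i.

Variables (n : nat) (S H : 'M[F]_(Nb D n + rb D n)).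

Definition calK : 'M[F]_NS :=
  (jetS (Pupto S) pts beta)^T *m invmx (Hupto H) *m jetS (Pupto S) pts beta.

(* K_{n-1}(y, x) = sum_{m<n} P_[m](y)^T H_[m]^{-1} P_[m](x)
   = P^{[n]}(y)^T (H^{[n]})^{-1} P^{[n]}(x), as a polynomial in y with
   coefficients in F[x] *)
Definition CDkernel : {mpoly {mpoly F[D]}[D]} :=
  \sum_(a < Nb D n) \sum_(b < Nb D n)
     map_mpoly (fun c : F => c%:MP) (Pupto S a 0)
     * ((invmx (Hupto H) a b)%:MP * Pupto S b 0)%:MP.

Definition jetK : 'M[{mpoly F[D]}]_(1, NS) :=
  jetS (const_mx CDkernel : 'cV_1) (fun i k => (pts i k)%:MP) beta.

End Perturbation.

Definition qdet (A : comUnitRingType) (k l m : nat) (MA : 'M[A]_k)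
    (MB : 'M[A]_(k, l)) (MC : 'M[A]_(m, k)) (MD : 'M[A]_(m, l)) : 'M[A]_(m, l) :=
  MD - MC *m invmx MA *m MB.

Definition mxC (F : fieldType) (D k l : nat) (M : 'M[F]_(k, l)) :
    'M[{mpoly F[D]}]_(k, l) := map_mx (fun c : F => c%:MP) M.

(* Main.v *)
Require Import Defs.
From HB Require Import structures.
From mathcomp Require Import all_boot all_order all_algebra.
From mathcomp Require Import mpoly complex.
From mathcomp Require Import zify ring.
Import GRing.Theory Num.Theory.
Local Open Scope ring_scope.

Set Implicit Arguments. Unset Strict Implicit.

Section Comb.
Variable D : nat.

Lemma mnm_le_mdeg (a : 'X_{1..D}) i : (a i <= mdeg a)%N.
Proof. by rewrite mdegE (bigD1 i) //= leq_addr. Qed.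

Lemma mem_mons k (a : 'X_{1..D}) : (a \in mons D k) = (mdeg a == k).
Proof.
rewrite /mons mem_sort mem_filter andbC.
have [<-|_] := eqVneq (mdeg a) k; last by rewrite andbF.
rewrite andbT /image_mem; apply/mapP.
exists [ffun i => inord (a i) : 'I_(mdeg a).+1]; first by rewrite mem_enum.
apply/mnmP=> i; rewrite mnmE ffunE inordK //; exact/mnm_le_mdeg.
Qed.

Lemma uniq_mons k : uniq (mons D k).
Proof.
rewrite /mons sort_uniq filter_uniq // /image_mem map_inj_uniq ?enum_uniq //.
move=> f g /mnmP E; apply/ffunP=> i; apply/val_inj; have := E i.
by rewrite !mnmE.
Qed.

Lemma mem_chi m (a : 'X_{1..D}) : (a \in chi D m) = (mdeg a < m)%N.
Proof.
elim: m => [|m IH] //=; rewrite mem_cat IH mem_mons ltnS (leq_eqVlt (mdeg a)).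
by rewrite orbC.
Qed.

Lemma uniq_chi m : uniq (chi D m).
Proof.
elim: m => [|m IH] //=; rewrite cat_uniq IH uniq_mons andbT /=.
apply/hasPn=> a; rewrite mem_mons mem_chi => /eqP ->; by rewrite ltnn.
Qed.

Lemma pairwise_const (T : eqType) (r : rel T) (s : seq T) :
  {in s &, forall x y, r x y} -> pairwise r s.
Proof.
elim: s => //= x s IH H; apply/andP; split.
  by apply/allP=> y ys; apply: H; rewrite ?inE ?eqxx ?ys ?orbT.
by apply: IH => y z ys zs; apply: H; rewrite inE ?ys ?zs orbT.
Qed.

Lemma pairwise_chi m :
  pairwise (fun a b : 'X_{1..D} => mdeg a <= mdeg b)%N (chi D m).
Proof.
elim: m => [|m IH] //=; rewrite pairwise_cat IH /=; apply/andP; split.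
  apply/allrelP => a b; rewrite mem_chi mem_mons => ha /eqP ->; exact: ltnW.
by apply: pairwise_const => a b; rewrite !mem_mons => /eqP -> /eqP ->.
Qed.

Lemma size_chi m : size (chi D m) = Nb D m. Proof. by []. Qed.

Lemma tdeg_lt n (i : 'I_(Nb D n + rb D n)) : (i < Nb D n)%N -> (tdeg i < n)%N.
Proof.
move=> lt; rewrite /tdeg /tmon nth_cat lt -mem_chi; exact: mem_nth.
Qed.

Lemma tdeg_eq n (i : 'I_(Nb D n + rb D n)) : (Nb D n <= i)%N -> tdeg i = n.
Proof.
move=> le; rewrite /tdeg /tmon nth_cat ltnNge le /=; apply/eqP; rewrite -mem_mons.
apply: mem_nth; rewrite -(ltn_add2l (Nb D n)) subnKC //; exact: ltn_ord.
Qed.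

Lemma tdeg_mono n (i j : 'I_(Nb D n + rb D n)) : (i <= j)%N -> (tdeg i <= tdeg j)%N.
Proof.
rewrite leq_eqVlt => /orP [/eqP/val_inj -> //| lt].
have /(pairwiseP 0%MM) H := pairwise_chi n.+1.
by apply: H => //; rewrite inE /= size_cat ltn_ord.
Qed.

Lemma mpreceq_deg (a b : 'X_{1..D}) : mpreceq a b -> (mdeg a <= mdeg b)%N.
Proof. by case/orP => [/ltnW //|/andP [/eqP -> _]]. Qed.

Lemma mem_jetidx (a b : 'X_{1..D}) : (a \in jetidx b) = mpreceq a b.
Proof.
rewrite /jetidx mem_filter mem_chi ltnS.
by case H: (mpreceq a b) => //=; exact: mpreceq_deg.
Qed.

Lemma uniq_jetidx (b : 'X_{1..D}) : uniq (jetidx b).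
Proof. exact/filter_uniq/uniq_chi. Qed.

Lemma mpreceq_refl (a : 'X_{1..D}) : mpreceq a a.
Proof. by rewrite /mpreceq !eqxx orbT. Qed.

Lemma lem_mpreceq (a b c : 'X_{1..D}) : (a <= b)%MM -> mpreceq b c -> mpreceq a c.
Proof.
move=> ab bc; have [-> //|ne] := eqVneq a b.
apply/orP; left; apply: (leq_trans _ (mpreceq_deg bc)).
rewrite -(submK ab) mdegD -{1}[mdeg a]add0n ltn_add2r lt0n mdeg_eq0.
apply: contra ne => /eqP E; apply/eqP; rewrite -(submK ab) E add0m.
by [].
Qed.

End Comb.

Unset Implicit Arguments. Set Strict Implicit.

Set Implicit Arguments. Unset Strict Implicit.

Section JetLin.
Variables (A : comUnitRingType) (D : nat).

Lemma jetD (p r : {mpoly A[D]}) pt a : jet (p + r) pt a = jet p pt a + jet r pt a.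
Proof. by rewrite /jet mderivmD mevalD mulrDr. Qed.

Lemma jetZ c (p : {mpoly A[D]}) pt a : jet (c *: p) pt a = c * jet p pt a.
Proof. by rewrite /jet mderivmZ mevalZ mulrCA. Qed.

Lemma jet0 pt a : jet (0 : {mpoly A[D]}) pt a = 0.
Proof. by rewrite /jet -(scale0r (0 : {mpoly A[D]})) mderivmZ mevalZ !mul0r mulr0. Qed.
End JetLin.

Section JetSum.
Variables (A : comUnitRingType) (D : nat).
Lemma jet_sum (I : Type) (r : seq I) (P : pred I) (f : I -> {mpoly A[D]}) pt a :
  jet (\sum_(i <- r | P i) f i) pt a = \sum_(i <- r | P i) jet (f i) pt a.
Proof. by apply: (big_morph (fun p => jet p pt a)) => [p s|]; rewrite ?jetD ?jet0. Qed.
End JetSum.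

Section JetX.
Variables (F : numFieldType) (D : nat).

Definition bterm (a k : nat) (c : F) : F := 'C(a, k)%:R * c ^+ (a - k).

Lemma jetX (a g : 'X_{1..D}) (pt : 'I_D -> F) :
  jet 'X_[a] pt g = \prod_(i < D) bterm (a i) (g i) (pt i).
Proof.
rewrite /jet mderivmX mevalZ mevalX /mfact.
have -> : (\prod_(i < D) (a i) ^_ (g i) = (\prod_(i < D) 'C(a i, g i)) * \prod_(i < D) (g i)`!)%N.
  by rewrite -big_split /=; apply: eq_bigr => i _; rewrite bin_ffact.
rewrite natrM -mulrA mulrCA mulKf; last by rewrite pnatr_eq0 -lt0n prodn_gt0 // => i; exact: fact_gt0.
rewrite natr_prod -big_split /=; apply: eq_bigr => i _; by rewrite mnmBE.
Qed.

Lemma vander1 (a b k : nat) (c : F) :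
  \sum_(j < k.+1) bterm a j c * bterm b (k - j) c = bterm (a + b) k c.
Proof.
rewrite /bterm -binomial.Vandermonde natr_sum mulr_suml; apply: eq_bigr => j _.
have jk := ltn_ord j; rewrite ltnS in jk.
have [aj|ja] := ltnP a j; first by rewrite bin_small // !(mul0r,mul0n).
have [bk|kb] := ltnP b (k - j); first by rewrite (bin_small bk) !(mul0r,mulr0,muln0).
rewrite natrM mulrACA -exprD; congr (_ * _ ^+ _); lia.
Qed.

End JetX.

Section Leib.
Variables (F : numFieldType) (D : nat).

Lemma jetX_leib (a b al : 'X_{1..D}) (pt : 'I_D -> F) (L : seq 'X_{1..D}) :
  uniq L -> (forall g, (g \in L) = (g <= al)%MM) ->
  jet 'X_[(a + b)%MM] pt al =
  \sum_(g <- L) jet 'X_[a] pt g * jet 'X_[b] pt (al - g)%MM.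
Proof.
move=> uL memL; set M := (mdeg al).+1.
pose Q := fun i : 'I_D => [pred j : 'I_M | (j <= al i)%N].
pose mk := fun f : {ffun 'I_D -> 'I_M} => [multinom (f i : nat) | i < D].
rewrite jetX.
transitivity (\prod_(i < D) \sum_(j : 'I_M | Q i j)
      bterm (a i) j (pt i) * bterm (b i) (al i - j) (pt i)).
  apply: eq_bigr => i _; rewrite mnmDE -vander1.
  rewrite (big_ord_widen M (fun j : nat => bterm (a i) j (pt i) * bterm (b i) (al i - j) (pt i))) /=.
    by apply: eq_bigl => j; rewrite ltnS.
  by rewrite ltnS; exact: mnm_le_mdeg.
rewrite bigA_distr_big_dep.
have pL : perm_eq L [seq mk f | f <- enum (family Q)].
  apply: uniq_perm => //.
    rewrite map_inj_uniq ?enum_uniq // => f g /mnmP E; apply/ffunP=> i.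
    by apply/val_inj; have := E i; rewrite !mnmE.
  move=> g; rewrite memL; apply/idP/mapP.
    move=> le; exists [ffun i => inord (g i) : 'I_M].
      rewrite mem_enum; apply/familyP => i; rewrite /Q inE ffunE inordK.
        exact: (mnm_lepP le).
      rewrite ltnS; apply: leq_trans (mnm_le_mdeg al i); exact: (mnm_lepP le).
    apply/mnmP => i; rewrite mnmE ffunE inordK //.
    rewrite ltnS; apply: leq_trans (mnm_le_mdeg al i); exact: (mnm_lepP le).
  case=> f; rewrite mem_enum => /familyP fQ ->; apply/mnm_lepP => i.
  by rewrite mnmE; exact: (fQ i).
rewrite (perm_big _ pL) big_map big_enum /=; apply: eq_bigr => f _.
rewrite !jetX -big_split /=; apply: eq_bigr => i _.
by rewrite mnmBE !mnmE.
Qed.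
End Leib.

Unset Implicit Arguments. Set Strict Implicit.

Set Implicit Arguments. Unset Strict Implicit.

Section Pert.
Variables (F : numFieldType) (D : nat).

Lemma sum_ord_nth (T : Type) (J : seq 'X_{1..D}) (f : 'X_{1..D} -> F) :
  \sum_(r < size J) f (nth 0%MM J r) = \sum_(g <- J) f g.
Proof. by rewrite (big_nth 0%MM) big_mkord. Qed.

Lemma pert_k (pt : 'I_D -> F) (be : 'X_{1..D}) (xk : 'X_{1..D} -> F) (a b : 'X_{1..D}) :
  \sum_(al <- jetidx be) xk al * jet 'X_[(a + b)%MM] pt al =
  \sum_(g <- jetidx be) \sum_(d <- jetidx be)
     jet 'X_[a] pt g * ((if mpreceq (g + d)%MM be then xk (g + d)%MM else 0) * jet 'X_[b] pt d).
Proof.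
set J := jetidx be; have uJ : uniq J := uniq_jetidx be.
transitivity (\sum_(al <- J) \sum_(g <- J)
   (if (g <= al)%MM then xk al * (jet 'X_[a] pt g * jet 'X_[b] pt (al - g)%MM) else 0)).
  rewrite big_seq [RHS]big_seq; apply: eq_bigr => al alJ.
  rewrite (@jetX_leib F D a b al pt [seq g <- J | (g <= al)%MM]).
  - by rewrite mulr_sumr big_filter big_mkcond.
  - exact: filter_uniq.
  move=> g; rewrite mem_filter andbC; case le: (g <= al)%MM => //=.
  rewrite ?andbT mem_jetidx; apply: lem_mpreceq le _; rewrite -mem_jetidx; exact: alJ.
  by rewrite andbF.
rewrite exchange_big /=; apply: eq_bigr => g gJ.
rewrite -big_mkcond /= -big_filter.
transitivity (\sum_(d <- [seq d <- J | mpreceq (g + d)%MM be])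
   jet 'X_[a] pt g * (xk (g + d)%MM * jet 'X_[b] pt d)); last first.
  by rewrite big_filter big_mkcond /=; apply: eq_bigr => d _; case: ifP; rewrite ?mul0r ?mulr0.
have pm : perm_eq [seq al <- J | (g <= al)%MM]
                  [seq (g + d)%MM | d <- [seq d <- J | mpreceq (g + d)%MM be]].
  apply: uniq_perm; first exact: filter_uniq.
    by rewrite map_inj_uniq ?filter_uniq ?uniq_chi // => x y /eqP; rewrite eqm_add2l => /eqP.
  move=> al; rewrite mem_filter; apply/andP/mapP.
    case=> le alJ; exists (al - g)%MM; last by rewrite addmC submK.
    rewrite mem_filter addmC submK //.
    have alb : mpreceq al be by rewrite -mem_jetidx.
    rewrite alb /= mem_jetidx; exact: (lem_mpreceq (lem_subr _ _) alb).
  case=> d; rewrite mem_filter => /andP [le _] ->; split; first exact: lem_addr.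
  by rewrite /J mem_jetidx.
rewrite (perm_big _ pm) big_map; apply: eq_bigr => d _.
rewrite mulrCA; congr (_ * (_ * _)); by rewrite addmC addmK.
Qed.
End Pert.

Unset Implicit Arguments. Set Strict Implicit.

Set Implicit Arguments. Unset Strict Implicit.

Section Gtr.
Variables (F : numFieldType) (D q : nat).
Variables (pts : 'I_q -> 'I_D -> F) (beta : 'I_q -> 'X_{1..D})
          (xi : 'I_q -> 'X_{1..D} -> F) (u : {mpoly F[D]} -> F) (n : nat).

Definition chicol : 'cV[{mpoly F[D]}]_(Nb D n + rb D n) := \col_j 'X_[tmon j].
Definition Jchi := jetS chicol pts beta.

Lemma sign_sq (m : nat) : (-1) ^+ m * (-1) ^+ m = 1 :> F.
Proof. by rewrite -exprMn mulrNN mulr1 expr1n. Qed.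

Lemma Gtr_uhat :
  Gtr (uhat pts beta xi u) n = Gtr u n + Jchi *m Xi beta xi *m Jchi^T.
Proof.
apply/matrixP => i j; rewrite /Jchi /jetS /Xi mul_mxrow_mxdiag tr_mxrow mul_mxrow_mxcol.
rewrite !mxE /uhat summxE; congr (_ + _); apply: eq_bigr => k _.
rewrite !mxE.
transitivity (\sum_(al <- jetidx (beta k)) xi k al * jet 'X_[(tmon i + tmon j)%MM] (pts k) al).
  have E : forall (s f x d : F), s * s = 1 -> s / f * x * (s * d) = x * (f^-1 * d).
    by move=> s f x d ss; rewrite -[RHS]mul1r -ss; ring.
  by apply: eq_bigr => al _; rewrite /delta_der /jet E // sign_sq.
rewrite pert_k exchange_big /=.
rewrite -(sum_ord_nth F (jetidx (beta k))); apply: eq_bigr => s _.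
rewrite !mxE -(sum_ord_nth F (jetidx (beta k))) mulr_suml; apply: eq_bigr => r _.
by rewrite !mxE mulrA.
Qed.
End Gtr.

Unset Implicit Arguments. Set Strict Implicit.

Set Implicit Arguments. Unset Strict Implicit.

Section JetMx.
Variables (F : numFieldType) (D q : nat).
Variables (pts : 'I_q -> 'I_D -> F) (beta : 'I_q -> 'X_{1..D}).

Lemma jetS_mul m m' (M : 'M[F]_(m', m)) (P : 'cV[{mpoly F[D]}]_m) :
  jetS (mxC D M *m P) pts beta = M *m jetS P pts beta.
Proof.
rewrite /jetS mul_mxrow; apply: eq_mxrow => k; apply/matrixP => r c.
rewrite !mxE jet_sum; apply: eq_bigr => j _.
by rewrite !mxE mul_mpolyC jetZ.
Qed.

Lemma jetS_usub m1 m2 (P : 'cV[{mpoly F[D]}]_(m1 + m2)) :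
  jetS (usubmx P) pts beta = usubmx (jetS P pts beta).
Proof. by apply/matrixP => r c; rewrite !mxE. Qed.

Lemma jetS_dsub m1 m2 (P : 'cV[{mpoly F[D]}]_(m1 + m2)) :
  jetS (dsubmx P) pts beta = dsubmx (jetS P pts beta).
Proof. by apply/matrixP => r c; rewrite !mxE. Qed.

Lemma nat_unit (k : nat) : (0 < k)%N -> (k%:R : F) \is a GRing.unit.
Proof. by move=> k0; rewrite unitfE pnatr_eq0 -lt0n. Qed.

Lemma mfact_gt0 (a : 'X_{1..D}) : (0 < mfact a)%N.
Proof. by rewrite /mfact prodn_gt0 // => i; exact: fact_gt0. Qed.

Lemma jet_mapX (m : 'X_{1..D}) (pt : 'I_D -> F) a :
  jet (map_mpoly (fun c : F => c%:MP) 'X_[m] : {mpoly {mpoly F[D]}[D]})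
      (fun k => (pt k)%:MP) a = (jet 'X_[m] pt a)%:MP.
Proof.
rewrite map_mpolyX /jet !mderivmX !mevalZ !mevalX.
rewrite rmorphM /= rmorphV /=; last exact/nat_unit/mfact_gt0.
rewrite !rmorph_nat rmorphM /= rmorph_nat.
congr (_ * (_ * _)); rewrite rmorph_prod; apply: eq_bigr => i _; by rewrite rmorphXn.
Qed.

Lemma jet_map (p : {mpoly F[D]}) (pt : 'I_D -> F) a :
  jet (map_mpoly (fun c : F => c%:MP) p : {mpoly {mpoly F[D]}[D]})
      (fun k => (pt k)%:MP) a = (jet p pt a)%:MP.
Proof.
rewrite [in LHS](mpolyE p) [in RHS](mpolyE p) raddf_sum /= !jet_sum rmorph_sum /=.
apply: eq_bigr => m _; rewrite map_mpolyZ jetZ jet_mapX jetZ.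
by rewrite [RHS]mpolyCM.
Qed.

End JetMx.

Section JetK.
Variables (F : numFieldType) (D q : nat).
Variables (pts : 'I_q -> 'I_D -> F) (beta : 'I_q -> 'X_{1..D}) (n : nat).

Lemma jetK_eq (S H : 'M[F]_(Nb D n + rb D n)) :
  (jetK pts beta S H)^T =
  mxC D ((jetS (Pupto S) pts beta)^T *m invmx (Hupto H)) *m Pupto S.
Proof.
apply/matrixP => c z; rewrite ord1 !mxE /CDkernel !jet_sum.
set P := Pupto S; set J := jetS P pts beta; set Hi := invmx (Hupto H).
under eq_bigr do rewrite jet_sum.
rewrite exchange_big /=; apply: eq_bigr => b _.
rewrite !mxE rmorph_sum /= mulr_suml; apply: eq_bigr => a _.
rewrite mulrC [_%:MP * map_mpoly _ _]mul_mpolyC jetZ jet_map.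
rewrite !mxE !rmorphM /=.
by rewrite mulrC mulrA.
Qed.
End JetK.

Unset Implicit Arguments. Set Strict Implicit.

Set Implicit Arguments. Unset Strict Implicit.

Section Alg.
Variable F : fieldType.

Lemma inv_right n (A B : 'M[F]_n) : A *m B = 1%:M -> invmx A = B.
Proof.
move=> AB; have [Au _] := mulmx1_unit AB.
by rewrite -[invmx A]mulmx1 -AB mulmxA mulVmx // mul1mx.
Qed.

Lemma blk_inv N1 N2 (S1 : 'M[F]_N1) (S21 : 'M[F]_(N2, N1)) : S1 \in unitmx ->
  invmx (block_mx S1 0 S21 1%:M) = block_mx (invmx S1) 0 (- (S21 *m invmx S1)) 1%:M.
Proof.
move=> U; apply: inv_right; rewrite mulmx_block !mulmx0 !mul0mx !addr0 !mulmx1.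
by rewrite mulmxV // mulmxN mul1mx subrr add0r -scalar_mx_block.
Qed.

Lemma unit_prod3 n (A B C : 'M[F]_n) : A *m B *m C \in unitmx -> B \in unitmx.
Proof. by rewrite !unitmx_mul => /andP [/andP [_ ->]]. Qed.

Lemma unit_blk_ul N1 N2 (A : 'M[F]_N1) (B : 'M[F]_(N1,N2)) (C : 'M[F]_N2) :
  block_mx A B 0 C \in unitmx -> A \in unitmx.
Proof. by rewrite !unitmxE det_ublock unitrM => /andP []. Qed.

Lemma unit_blk_ul' N1 N2 (A : 'M[F]_N1) (B : 'M[F]_(N2,N1)) (C : 'M[F]_N2) :
  block_mx A 0 B C \in unitmx -> A \in unitmx.
Proof. by rewrite !unitmxE det_lblock unitrM => /andP []. Qed.

Lemma unit_sandwich n (S M : 'M[F]_n) : S \in unitmx -> M \in unitmx ->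
  S *m M *m S^T \in unitmx.
Proof. by move=> SU MU; rewrite !unitmx_mul SU MU unitmx_tr SU. Qed.

Lemma unsandwich n (S G H : 'M[F]_n) : S \in unitmx ->
  G = invmx S *m H *m (invmx S)^T -> H = S *m G *m S^T.
Proof.
move=> SU ->; rewrite !mulmxA mulmxV // mul1mx -mulmxA -trmx_mul.
by rewrite mulmxV // trmx1 mulmx1.
Qed.

End Alg.

Section MainAlg.
Variables (F : fieldType) (N1 N2 NS : nat).

Lemma main_alg (S Sh H Hh G Gh : 'M[F]_(N1 + N2)) (Jc : 'M[F]_(N1 + N2, NS))
  (X : 'M[F]_NS) (S1 Sh1 H1 Hh1 : 'M[F]_N1) (S21 Sh21 : 'M[F]_(N2, N1))
  (H2 Hh2 : 'M[F]_N2) :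
  S = block_mx S1 0 S21 1%:M -> Sh = block_mx Sh1 0 Sh21 1%:M ->
  S \in unitmx -> Sh \in unitmx ->
  H = block_mx H1 0 0 H2 -> Hh = block_mx Hh1 0 0 Hh2 ->
  G = invmx S *m H *m (invmx S)^T -> Gh = invmx Sh *m Hh *m (invmx Sh)^T ->
  G \in unitmx -> Gh \in unitmx -> Gh = G + Jc *m X *m Jc^T ->
  let J1 := usubmx (S *m Jc) in let J2 := dsubmx (S *m Jc) in
  let A := 1%:M + X *m (J1^T *m invmx H1 *m J1) in
  [/\ A \in unitmx,
      Sh21 *m invmx S1 - S21 *m invmx S1 = - (J2 *m invmx A *m X *m J1^T *m invmx H1)
    & Hh2 = H2 + J2 *m invmx A *m X *m J2^T].
Proof.
move=> ES ESh SU ShU EH EHh EG EGh GU GhU EGJ J1 J2 A.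
have S1U : S1 \in unitmx by apply: (@unit_blk_ul' _ _ N2 _ S21 1%:M); rewrite -ES.
have Sh1U : Sh1 \in unitmx by apply: (@unit_blk_ul' _ _ N2 _ Sh21 1%:M); rewrite -ESh.
have EH' := unsandwich SU EG; have EHh' := unsandwich ShU EGh.
have HU : H \in unitmx by rewrite EH'; exact: unit_sandwich.
have HhU : Hh \in unitmx by rewrite EHh'; exact: unit_sandwich.
have H1U : H1 \in unitmx by apply: (@unit_blk_ul _ _ N2 _ 0 H2); rewrite -EH.
have Hh1U : Hh1 \in unitmx by apply: (@unit_blk_ul _ _ N2 _ 0 Hh2); rewrite -EHh.
have EJ : S *m Jc = col_mx J1 J2 by rewrite vsubmxK.
have EM : S *m Gh *m S^T = block_mx (H1 + J1 *m X *m J1^T) (J1 *m X *m J2^T)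
                                    (J2 *m X *m J1^T) (H2 + J2 *m X *m J2^T).
  rewrite EGJ mulmxDr mulmxDl -EH' EH !mulmxA -[S *m Jc *m X *m Jc^T *m S^T]mulmxA.
  rewrite -trmx_mul EJ tr_col_mx mul_col_mx mul_col_row add_block_mx.
  by rewrite !add0r.
set M11 := H1 + J1 *m X *m J1^T.
(* L := Sh S^-1 *)
set L1 := Sh1 *m invmx S1; set L21 := Sh21 *m invmx S1 - S21 *m invmx S1.
have EL : Sh = block_mx L1 0 L21 1%:M *m S.
  rewrite ES mulmx_block !mulmx0 !mul0mx !addr0 !mulmx1 mul1mx /L1 /L21.
  rewrite -mulmxA mulVmx // mulmx1 mulmxBl -!mulmxA !mulVmx // !mulmx1.
  by rewrite subrK add0r ESh.
have L1U : L1 \in unitmx by rewrite unitmx_mul Sh1U unitmx_inv.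
have EHL : Hh = block_mx L1 0 L21 1%:M *m (S *m Gh *m S^T) *m (block_mx L1 0 L21 1%:M)^T.
  by rewrite EHh' EL trmx_mul !mulmxA.
rewrite EM EHh tr_block_mx !trmx0 trmx1 !mulmx_block in EHL.
rewrite !mul0mx !mulmx0 !mul1mx !mulmx1 ?addr0 ?add0r in EHL.
have [E11 E12 E21 E22] := eq_block_mx EHL.
have M11U : M11 \in unitmx.
  by apply: (@unit_prod3 _ _ L1 _ L1^T); rewrite /M11 -E11.
have L1tU : L1^T \in unitmx by rewrite unitmx_tr.
have EL21 : L21 *m M11 = - (J2 *m X *m J1^T).
  have E := congr1 (mulmx^~ (invmx L1^T)) E21.
  rewrite /= mul0mx (mulmxK L1tU) in E.
  by apply/eqP; rewrite -addr_eq0 /M11 -E.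
have Key : A *m X *m J1^T = X *m J1^T *m invmx H1 *m M11.
  rewrite /A /M11 !mulmxDl !mulmxDr mul1mx !mulmxA.
  by rewrite -(mulmxA _ (invmx H1) H1) mulVmx // mulmx1.
have AU : A \in unitmx.
  have AB : A *m (1%:M - X *m J1^T *m invmx M11 *m J1) = 1%:M.
    rewrite mulmxBr mulmx1 !mulmxA Key -(mulmxA _ M11) mulmxV // mulmx1.
    by rewrite /A !mulmxA addrK.
  by have [] := mulmx1_unit AB.
have EL21' : L21 = - (J2 *m invmx A *m X *m J1^T *m invmx H1).
  have T : J2 *m invmx A *m X *m J1^T *m invmx H1 *m M11 = J2 *m X *m J1^T.
    have Key' := Key; rewrite -!mulmxA in Key'.
    by rewrite -!mulmxA -Key' (mulmxA (invmx A)) mulVmx // mul1mx !mulmxA.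
  rewrite -[L21]mulmx1 -(mulmxV M11U) mulmxA EL21 -T.
  by rewrite mulNmx mulmxK.
split => //.
rewrite E22 EL21 addNr mul0mx add0r EL21'.
have E2 : J2 *m X *m J2^T = J2 *m invmx A *m X *m J2^T +
     J2 *m invmx A *m X *m J1^T *m invmx H1 *m J1 *m X *m J2^T.
  rewrite -{1}[J2]mulmx1 -(mulVmx AU) !mulmxA -(mulmxA _ A X) /A.
  by rewrite mulmxDl mul1mx mulmxDr mulmxDl !mulmxA.
rewrite E2 mulNmx !mulmxA.
rewrite addrCA; congr (_ + _); by rewrite addrCA addNr addr0.
Qed.
End MainAlg.

Unset Implicit Arguments. Set Strict Implicit.

Set Implicit Arguments. Unset Strict Implicit.

Section Blocks.
Variables (F : fieldType) (D n : nat).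
Notation N1 := (Nb D n). Notation N2 := (rb D n).

Lemma S_block (S : 'M[F]_(N1 + N2)) : block_lower_unitri S ->
  S = block_mx (ulsubmx S) 0 (dlsubmx S) 1%:M.
Proof.
move=> BS; rewrite -[S in LHS]submxK; congr block_mx.
  apply/matrixP => i j; rewrite !mxE; apply: (BS _ _).1.
  by rewrite (@tdeg_eq _ _ (rshift N1 j)) /= ?leq_addr //; apply: tdeg_lt => /=.
apply/matrixP => i j; rewrite !mxE; rewrite (BS _ _).2.
  by rewrite (inj_eq (@rshift_inj _ _)).
by rewrite !tdeg_eq //= leq_addr.
Qed.

Lemma H_block (H : 'M[F]_(N1 + N2)) : block_diagonal H ->
  H = block_mx (ulsubmx H) 0 0 (drsubmx H).
Proof.
move=> BH; rewrite -[H in LHS]submxK; congr block_mx.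
  apply/matrixP => i j; rewrite !mxE; apply: BH.
  rewrite (@tdeg_eq _ _ (rshift N1 j)) /= ?leq_addr // neq_ltn.
  by apply/orP; left; apply: tdeg_lt; rewrite /= ltn_ord.
apply/matrixP => i j; rewrite !mxE; apply: BH.
rewrite (@tdeg_eq _ _ (rshift N1 i)) /= ?leq_addr // eq_sym neq_ltn.
by apply/orP; left; apply: tdeg_lt; rewrite /= ltn_ord.
Qed.

Lemma S_unit (S : 'M[F]_(N1 + N2)) : block_lower_unitri S -> S \in unitmx.
Proof.
move=> BS; rewrite unitmxE det_trig.
  by rewrite big1 ?unitr1 // => i _; rewrite (BS i i).2 // eqxx.
apply/is_trig_mxP => i j lt.
have := tdeg_mono (ltnW lt); rewrite leq_eqVlt => /orP [/eqP E|lt'].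
  by rewrite (BS i j).2 //; case: eqP => // E'; rewrite E' ltnn in lt.
exact: (BS i j).1.
Qed.
End Blocks.

Unset Implicit Arguments. Set Strict Implicit.

Set Implicit Arguments. Unset Strict Implicit.

Section Glue.
Variables (F : numFieldType) (D n : nat).
Notation N1 := (Nb D n). Notation N2 := (rb D n).

Lemma Pvec_eq (S : 'M[F]_(N1 + N2)) : Pvec S = mxC D S *m chicol F D n.
Proof. by apply/matrixP => i j; rewrite !mxE; apply: eq_bigr => k _; rewrite !mxE. Qed.

Lemma Pvec_blocks (S : 'M[F]_(N1 + N2)) S1 S21 : S = block_mx S1 0 S21 1%:M ->
  Pupto S = mxC D S1 *m usubmx (chicol F D n) /\
  Pblk S = mxC D S21 *m usubmx (chicol F D n) + dsubmx (chicol F D n).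
Proof.
move=> ES; rewrite /Pupto /Pblk Pvec_eq ES.
set c := chicol F D n; have -> : mxC D (block_mx S1 0 S21 1%:M) *m c =
   mxC D (block_mx S1 0 S21 1%:M) *m col_mx (usubmx c) (dsubmx c) by rewrite vsubmxK.
rewrite /mxC map_block_mx mul_block_col col_mxKu col_mxKd map_mx0 map_mx1.
by rewrite mul0mx addr0 mul1mx.
Qed.

Lemma mxC_inv m (A : 'M[F]_m) : A \in unitmx -> invmx (mxC D A) = mxC D (invmx A).
Proof.
move=> AU; have AB : mxC D A *m mxC D (invmx A) = 1%:M.
  by rewrite /mxC -map_mxM mulmxV // map_mx1.
have [AU' _] := mulmx1_unit AB.
by rewrite -[invmx _]mulmx1 -AB mulmxA mulVmx // mul1mx.
Qed.
Lemma mxCM m1 m2 m3 (A : 'M[F]_(m1, m2)) (B : 'M[F]_(m2, m3)) :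
  mxC D (A *m B) = mxC D A *m mxC D B.
Proof. exact: map_mxM. Qed.

Lemma mxCB m1 m2 (A B : 'M[F]_(m1, m2)) : mxC D (A - B) = mxC D A - mxC D B.
Proof. exact: map_mxB. Qed.

Lemma zmod_fact (V : zmodType) (a b c : V) : a + c = b + c + (a - b).
Proof. by rewrite addrAC addrCA subrr addr0. Qed.

Lemma P_part m (S Sh : 'M[F]_(N1 + N2)) S1 S21 Sh1 Sh21 (JPn : 'M[F]_(N2, m))
  (X A : 'M[F]_m) (J1 : 'M[F]_(N1, m)) (Hi : 'M[F]_N1) :
  S = block_mx S1 0 S21 1%:M -> Sh = block_mx Sh1 0 Sh21 1%:M ->
  S \in unitmx -> A \in unitmx ->
  Sh21 *m invmx S1 - S21 *m invmx S1 = - (JPn *m invmx A *m X *m J1^T *m Hi) ->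
  Pblk Sh = Pblk S - mxC D JPn *m invmx (mxC D A) *m
                       (mxC D X *m (mxC D (J1^T *m Hi) *m Pupto S)).
Proof.
move=> ES ESh SU AU EL.
have S1U : S1 \in unitmx by apply: (@unit_blk_ul' _ _ N2 _ S21 1%:M); rewrite -ES.
have [E1 E2] := Pvec_blocks ES; have [_ E2h] := Pvec_blocks ESh.
set c1 := usubmx (chicol F D n); set c2 := dsubmx (chicol F D n).
have K : JPn *m invmx A *m X *m (J1^T *m Hi) *m S1 = S21 - Sh21.
  have E := congr1 (mulmx^~ S1) EL; rewrite /= mulmxBl !(mulmxKV S1U) mulNmx in E.
  by rewrite mulmxA -[LHS]opprK -E opprB.
have T : mxC D JPn *m invmx (mxC D A) *m (mxC D X *m (mxC D (J1^T *m Hi) *m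
           (mxC D S1 *m c1))) = mxC D (JPn *m invmx A *m X *m (J1^T *m Hi) *m S1) *m c1.
  by rewrite (mxC_inv AU) !mxCM !mulmxA.
rewrite E2h E2 E1 T K mxCB mulmxBl opprB.
exact: zmod_fact.
Qed.
End Glue.


Unset Implicit Arguments. Set Strict Implicit.

Theorem mainTheorem15 (R : rcfType) (D q : nat)
    (u : {mpoly R[i][D]} -> R[i])
    (x : 'I_q -> 'rV[R]_D) (beta : 'I_q -> 'X_{1..D})
    (xi : 'I_q -> 'X_{1..D} -> R[i]) :
  let pts : 'I_q -> 'I_D -> R[i] := fun i k => ((x i 0 k)%:C)%C in
  let uh := uhat pts beta xi u in
  lin_functional u ->
  injective x ->
  quasi_definite u ->
  quasi_definite uh ->
  forall n : nat, (1 <= n)%N ->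
  forall S H Sh Hh : 'M[R[i]]_(Nb D n + rb D n),
  LU_factorization u S H ->
  LU_factorization uh Sh Hh ->
  let A := 1%:M + Xi beta xi *m calK pts beta S H in
  let JPn := jetS (Pblk S) pts beta in
  [/\ A \in unitmx,
      Pblk Sh = qdet (mxC D A) (mxC D (Xi beta xi) *m (jetK pts beta S H)^T)
                     (mxC D JPn) (Pblk S)
    & Hblk Hh = qdet A (- (Xi beta xi *m JPn^T)) JPn (Hblk H)].
Proof.
move=> pts uh _ _ qdu qduh n _ S H Sh Hh [BS BH EG] [BSh BHh EGh] A JPn.
have ES := S_block BS; have ESh := S_block BSh.
have EH := H_block BH; have EHh := H_block BHh.
have SU := S_unit BS; have ShU := S_unit BSh.
have EGJ := Gtr_uhat pts beta xi u n.
have [AU EL EH2] := main_alg ES ESh SU ShU EH EHh EG EGh (qdu n) (qduh n) EGJ.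
have JP : jetS (Pvec S) pts beta = S *m Jchi pts beta n.
  by rewrite Pvec_eq jetS_mul.
have J1E : jetS (Pupto S) pts beta = usubmx (S *m Jchi pts beta n).
  by rewrite /Pupto jetS_usub JP.
have J2E : JPn = dsubmx (S *m Jchi pts beta n).
  by rewrite /JPn /Pblk jetS_dsub JP.
have AE : A = 1%:M + Xi beta xi *m ((usubmx (S *m Jchi pts beta n))^T *m
            invmx (ulsubmx H) *m usubmx (S *m Jchi pts beta n)).
  by rewrite /A /calK J1E.
rewrite -AE -J2E in AU EL EH2.
split; first exact: AU.
  by rewrite /qdet jetK_eq J1E; apply: P_part ES ESh SU AU EL.
by rewrite /qdet /Hblk EH2 mulmxN opprK mulmxA.
Qed.
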